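(* Let $G$ be a finite abelian group (written multiplicatively), let $R \subseteq \mathbb{Q}$ be a subring, and let $n \in \mathbb{N}$. The map \[ f: R \otimes_{\mathbb{Z}} Q_n(\mathbb{Z},G) \to Q_n(R,G), \qquad r\otimes\Big(\sum_{g\in G} \alpha_g [g] + I(\mathbb{Z}, G)^{n+1}\Big) \mapsto \sum_{g\in G} r\alpha_g [g] + I(R, G)^{n+1} \] is a well-defined isomorphism of $R$-modules, where $R \otimes_{\mathbb{Z}} Q_n(\mathbb{Z},G)$ is regarded as an $R$-module by extension of scalars.
   Context: For a ring $A$ (commutative with identity) and a group $G$, $A[G]$ denotes the group algebra and $[g]$ the element $g\in G$ viewed in $A[G]$. The augmentation map $\mathrm{aug}: A[G]\to A$ is the $A$-linear map with $[g]\mapsto 1$ for all $g\in G$; the augmentation ideal is $I(A,G) = \ker(\mathrm{aug})$, and $Q_n(A,G) = I(A,G)^n / I(A,G)^{n+1}$. *)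

(* Defs.v *)
From HB Require Import structures.
From mathcomp Require Import all_boot all_order all_algebra all_fingroup.
From mathcomp Require Import boolp.

Set Implicit Arguments.
Unset Strict Implicit.
Unset Printing Implicit Defensive.

Import GRing.Theory.
Local Open Scope ring_scope.
Local Open Scope quotient_scope.

(* Group algebra A[G] of a finite group G over a commutative ring A,   *)
(* with elements the (finitely supported) functions G -> A,            *)
(* i.e. sum_g a(g) [g].  Multiplication is convolution (NOT the        *)
(* pointwise product carried by {ffun G -> A}).                        *)
Section GroupAlgebra.
Variables (A : comNzRingType) (G : finGroupType).

Local Notation AG := {ffun G -> A}.

Definition gelt (g : G) : AG := [ffun h => (h == g)%:R].

Definition conv (a b : AG) : AG :=
  [ffun g => \sum_(h : G) a h * b (h^-1 * g)%g].

Definition gscale (s : A) (a : AG) : AG := [ffun g => s * a g].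

Definition aug (a : AG) : A := \sum_(g : G) a g.

Fixpoint Ipow (n : nat) : AG -> Prop :=
  match n with
  | 0 => fun _ => True
  | k.+1 => fun x => exists s : seq (AG * AG),
      (forall p, p \in s -> aug p.1 = 0 /\ Ipow k p.2) /\
      x = \sum_(p <- s) conv p.1 p.2
  end.

Definition Ipred (n : nat) : {pred AG} := fun x => `[< Ipow n x >].

Lemma conv0l b : conv 0 b = 0.
Proof. by apply/ffunP=> g; rewrite !ffunE big1 // => h _; rewrite ffunE mul0r. Qed.

Lemma convNl a b : conv (- a) b = - conv a b.
Proof.
apply/ffunP=> g; rewrite !ffunE -sumrN; apply: eq_bigr => h _.
by rewrite ffunE mulNr.
Qed.

Lemma convZl s a b : conv (gscale s a) b = gscale s (conv a b).
Proof.
apply/ffunP=> g; rewrite !ffunE mulr_sumr; apply: eq_bigr => h _.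
by rewrite ffunE mulrA.
Qed.

Lemma augN a : aug (- a) = - aug a.
Proof. by rewrite /aug -sumrN; apply: eq_bigr => g _; rewrite ffunE. Qed.

Lemma augZ s a : aug (gscale s a) = s * aug a.
Proof. by rewrite /aug mulr_sumr; apply: eq_bigr => g _; rewrite ffunE. Qed.

Lemma gscaleN s a : gscale s (- a) = - gscale s a.
Proof. by apply/ffunP=> g; rewrite !ffunE mulrN. Qed.

Lemma gscale_sum s (r : seq (AG * AG)) (F : AG * AG -> AG) :
  gscale s (\sum_(p <- r) F p) = \sum_(p <- r) gscale s (F p).
Proof.
apply/ffunP=> g; rewrite ffunE !sum_ffunE mulr_sumr.
by apply: eq_bigr => p _; rewrite ffunE.
Qed.

Lemma Ipred_zmod n : zmod_closed (Ipred n).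
Proof.
case: n => [|n]; first by split=> // *; apply/asboolP.
split; first by apply/asboolP; exists [::]; split=> //; rewrite big_nil.
move=> x y /asboolP [s [Hs ->]] /asboolP [t [Ht ->]]; apply/asboolP.
exists (s ++ map (fun p => (- p.1, p.2)) t); split.
  move=> p; rewrite mem_cat => /orP [/Hs //|/mapP [q /Ht [q1 q2] ->]] /=.
  by rewrite augN q1 oppr0.
rewrite big_cat big_map /= -sumrN; congr (_ + _).
by apply: eq_bigr => p _; rewrite convNl.
Qed.

HB.instance Definition _ n := GRing.isZmodClosed.Build AG (Ipred n) (Ipred_zmod n).

Lemma Ipred_scale n s x : x \in Ipred n -> gscale s x \in Ipred n.
Proof.
case: n => [|n]; first by move=> _; apply/asboolP.
move=> /asboolP [t [Ht ->]]; apply/asboolP.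
exists (map (fun p => (gscale s p.1, p.2)) t); split.
  move=> p /mapP [q /Ht [q1 q2] ->] /=.
  by rewrite augZ q1 mulr0.
rewrite big_map gscale_sum; apply: eq_bigr => p _.
by rewrite convZl.
Qed.

Record Ielt (n : nat) := MkIelt { Ival : AG; Ivalin : Ival \in Ipred n }.

Section Quot.
Variable n : nat.

HB.instance Definition _ := [isSub for @Ival n].
HB.instance Definition _ := [Choice of Ielt n by <:].
HB.instance Definition _ := [SubChoice_isSubZmodule of Ielt n by <:].

Definition Inext : {pred Ielt n} := fun x => Ival x \in Ipred n.+1.

Lemma Inext_zmod : zmod_closed Inext.
Proof.
split; first exact: (rpred0 (Ipred n.+1)).
move=> x y hx hy; change (Ival x - Ival y \in Ipred n.+1).
exact: rpredB.
Qed.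

HB.instance Definition _ := GRing.isZmodClosed.Build (Ielt n) Inext Inext_zmod.

Definition Qn := Quotient.quot Inext.
HB.instance Definition _ := GRing.Zmodule.on Qn.

Definition Iscale (s : A) (x : Ielt n) : Ielt n :=
  MkIelt (Ipred_scale s (Ivalin x)).

Lemma Iscale_val s x : Ival (Iscale s x) = gscale s (Ival x).
Proof. by []. Qed.

Lemma IscaleA a b v : Iscale a (Iscale b v) = Iscale (a * b) v.
Proof. by apply: val_inj; apply/ffunP=> g; rewrite /= !ffunE mulrA. Qed.

Lemma Iscale1 : left_id 1 Iscale.
Proof. by move=> v; apply: val_inj; apply/ffunP=> g; rewrite /= !ffunE mul1r. Qed.

Lemma IscaleDr : right_distributive Iscale +%R.
Proof.
move=> a u v; apply: val_inj; apply/ffunP=> g.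
by rewrite /= !ffunE mulrDr.
Qed.

Lemma IscaleDl v : {morph Iscale^~ v : a b / a + b}.
Proof.
move=> a b; apply: val_inj; apply/ffunP=> g.
by rewrite /= !ffunE mulrDl.
Qed.

HB.instance Definition _ :=
  GRing.Zmodule_isLmodule.Build A (Ielt n) IscaleA Iscale1 IscaleDr IscaleDl.

Lemma Inext_scale s x : x \in Inext -> s *: x \in Inext.
Proof. exact: Ipred_scale. Qed.

Definition qscale (s : A) (q : Qn) : Qn := \pi_Qn (s *: generic_quotient.repr q).

Lemma pi_scale s x : \pi_Qn (s *: x) = qscale s (\pi_Qn x).
Proof.
rewrite /qscale; apply/eqP; rewrite -Quotient.idealrBE -scalerBr.
apply: Inext_scale; rewrite Quotient.idealrBE.
by apply/eqP; exact: (esym (reprK _)).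

Qed.

Lemma qscaleA a b v : qscale a (qscale b v) = qscale (a * b) v.
Proof. by rewrite -[v](@reprK _ Qn) -!pi_scale scalerA. Qed.

Lemma qscale1 : left_id 1 qscale.
Proof. by move=> v; rewrite -[v](@reprK _ Qn) -pi_scale scale1r. Qed.

Lemma qscaleDr : right_distributive qscale +%R.
Proof.
move=> a u v; rewrite -[u](@reprK _ Qn) -[v](@reprK _ Qn) -pi_addr -!pi_scale scalerDr.
by rewrite pi_addr.
Qed.

Lemma qscaleDl v : {morph qscale^~ v : a b / a + b}.
Proof. by move=> a b; rewrite -[v](@reprK _ Qn) -!pi_scale scalerDl pi_addr. Qed.

HB.instance Definition _ :=
  GRing.Zmodule_isLmodule.Build A Qn qscaleA qscale1 qscaleDr qscaleDl.

End Quot.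
End GroupAlgebra.

Arguments Qn A G n : clear implicits.
Arguments Ielt A G n : clear implicits.

Section MapCoef.
Variables (A B : comNzRingType) (G : finGroupType) (phi : {rmorphism A -> B}).

Definition mapAG (a : {ffun G -> A}) : {ffun G -> B} := [ffun g => phi (a g)].

Lemma mapAG_conv a b : mapAG (conv a b) = conv (mapAG a) (mapAG b).
Proof.
apply/ffunP=> g; rewrite !ffunE rmorph_sum; apply: eq_bigr => h _.
by rewrite rmorphM !ffunE.
Qed.

Lemma mapAG_aug a : aug (mapAG a) = phi (aug a).
Proof. by rewrite /aug rmorph_sum; apply: eq_bigr => g _; rewrite ffunE. Qed.

Lemma mapAG_sum (r : seq ({ffun G -> A} * {ffun G -> A})) F :
  mapAG (\sum_(p <- r) F p) = \sum_(p <- r) mapAG (F p).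
Proof.
apply/ffunP=> g; rewrite ffunE !sum_ffunE rmorph_sum.
by apply: eq_bigr => p _; rewrite ffunE.
Qed.

Lemma mapAG_Ipred n x : x \in @Ipred A G n -> mapAG x \in @Ipred B G n.
Proof.
elim: n x => [|n IH] x; first by move=> _; apply/asboolP.
move=> /asboolP [t [Ht ->]]; apply/asboolP.
exists (map (fun p => (mapAG p.1, mapAG p.2)) t); split.
  move=> p /mapP [q /Ht [q1 q2] ->] /=; split.
    by rewrite mapAG_aug q1 rmorph0.
  by have /asboolP := IH _ (asboolT q2).
by rewrite big_map mapAG_sum; apply: eq_bigr => p _; rewrite mapAG_conv.
Qed.

Definition mapIelt n (x : Ielt A G n) : Ielt B G n :=
  MkIelt (mapAG_Ipred (Ivalin x)).

End MapCoef.

(* (T, t) is R (x)_Z M, regarded as an R-module by extension of          *)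
(* scalars, with t r x = r (x) x: t is Z-bilinear, universal among      *)
(* Z-bilinear maps out of R x M (universal property of the tensor       *)
(* product), and R acts on T by s *: (r (x) x) = (s r) (x) x.            *)
Definition biadditive (U M V : zmodType) (b : U -> M -> V) : Prop :=
  (forall x, zmod_morphism (b ^~ x)) /\ (forall r, zmod_morphism (b r)).

Definition is_scalar_ext_tensor (R : comNzRingType) (M : zmodType)
    (T : lmodType R) (t : R -> M -> T) : Prop :=
  [/\ biadditive t,
      (forall (s r : R) (x : M), t (s * r) x = s *: t r x),
      (forall (V : zmodType) (b : R -> M -> V), biadditive b ->
         exists h : {additive T -> V}, forall r x, h (t r x) = b r x) &
      (forall (V : zmodType) (h1 h2 : {additive T -> V}),
         (forall r x, h1 (t r x) = h2 (t r x)) -> h1 =1 h2)].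

(* Main.v *)
Require Import Defs.
From HB Require Import structures.
From mathcomp Require Import all_boot all_order all_algebra all_fingroup.
From mathcomp Require Import boolp.
From mathcomp Require Import ring.
Import Order.TTheory GRing.Theory Num.Theory.
Local Open Scope ring_scope.
Local Open Scope quotient_scope.
Section PA.
Variables (U V : zmodType) (f : U -> V) (hf : zmod_morphism f).
Definition packadd_fun := f.
HB.instance Definition _ := GRing.isZmodMorphism.Build U V packadd_fun hf.
Definition packadd : {additive U -> V} := packadd_fun.
End PA.
Arguments packadd {U V f} hf.
Lemma packaddE U V f hf x : @packadd U V f hf x = f x. Proof. by []. Qed.
Section PL.
Variables (R : comNzRingType) (U V : lmodType R) (f : {additive U -> V}) (hf : scalable f).
Definition packlin_fun := (f : U -> V).
HB.instance Definition _ := GRing.Additive.on packlin_fun.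
HB.instance Definition _ := GRing.isScalable.Build R U V *:%R packlin_fun hf.
Definition packlin : {linear U -> V} := packlin_fun.
End PL.
Arguments packlin {R U V f} hf.
Lemma packlinE R U V f hf x : @packlin R U V f hf x = f x. Proof. by []. Qed.

Section Main.
Variables (G : finGroupType) (R : comNzRingType) (iota : {rmorphism R -> rat}).
Hypothesis hinj : injective iota.

Definition UF (w : R) (d : nat) := iota w = (d%:R)^-1 /\ (0 < d)%N.

Lemma UF1 : UF 1 1.
Proof. by split; rewrite ?rmorph1 ?invr1. Qed.

Lemma UF_mul w1 d1 w2 d2 : UF w1 d1 -> UF w2 d2 -> UF (w1 * w2) (d1 * d2).
Proof.
move=> [h1 p1] [h2 p2]; split; last by rewrite muln_gt0 p1.
by rewrite rmorphM h1 h2 natrM invfM.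
Qed.

Lemma UF_scale w1 d1 w2 d2 : UF w1 d1 -> UF w2 d2 -> (w1 * w2) *~ d2 = w1.
Proof.
move=> [h1 p1] [h2 p2]; apply: hinj; rewrite rmorphMz rmorphM h1 h2.
have : (d2%:R : rat) != 0 by rewrite pnatr_eq0 -lt0n.
move=> hd. rewrite -mulrzr -mulrA. change ((Posz d2)%:~R : rat) with (d2%:R : rat). by rewrite mulVf ?mulr1.
Qed.

Lemma keyq (a b N D : rat) : D != 0 -> a*N + b*D = 1 -> N/D * a + b = D^-1.
Proof.
move=> hD h. transitivity ((a*N + b*D)/D). field. exact: hD.
by rewrite h mul1r.
Qed.

Lemma cross (a b D E : rat) : D != 0 -> E != 0 -> E^-1 * a = D^-1 * b -> D * a = E * b.
Proof.
move=> hD hE h.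
have -> : D * a = D * E * (E^-1 * a). field. exact: hE.
rewrite h. field. exact: hD.
Qed.

Lemma UF_of r : exists w d m, UF w d /\ r = w *~ m.
Proof.
set x := iota r.
have [u [v huv]] := Bezoutz (numq x) (denq x).
have g1 : gcdz (numq x) (denq x) = 1 by rewrite /gcdz (eqP (coprime_num_den x)).
rewrite g1 in huv.
have hx : x = (numq x)%:~R / (denq x)%:~R.
  by rewrite numqE mulfK // intr_eq0 gt_eqF // denq_gt0.
have hd : (`|denq x|%N%:R : rat) = (denq x)%:~R.
  by rewrite natr_absz gtr0_norm ?denq_gt0.
have hd0 : ((denq x)%:~R : rat) != 0 by rewrite intr_eq0 gt_eqF // denq_gt0.
have huvq : (u%:~R * (numq x)%:~R + v%:~R * (denq x)%:~R : rat) = 1.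
  by rewrite -!intrM -intrD huv.
have key : forall N D : rat, D != 0 -> u%:~R*N + v%:~R*D = 1 ->
    N/D * u%:~R + v%:~R = D^-1 by move=> N D; exact: keyq.
have hw : iota (r *~ u + v%:~R) = (`|denq x|%N%:R)^-1.
  rewrite hd rmorphD rmorphMz rmorph_int -/x -mulrzr.
  rewrite [X in X * _]hx. exact: key.
exists (r *~ u + v%:~R), `|denq x|%N, (numq x); split.
  by split => //; rewrite absz_gt0 gt_eqF // denq_gt0.
apply: hinj; rewrite rmorphMz hw hd -/x [LHS]hx -mulrzr.
rewrite mul1r -mulrzr mulrC; by rewrite mul1r mulrzr.
Qed.

Local Notation mapz := (@mapAG int R G intr).

Definition RepP n (x : {ffun G -> R}) := exists w d (y : {ffun G -> int}),
  [/\ UF w d, y \in @Ipred int G n & x = gscale w (mapz y)].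

Lemma iota_int (z : int) : iota z%:~R = z%:~R.
Proof. exact: rmorph_int. Qed.

Lemma comb_pt w1 d1 w2 d2 (a b : int) : UF w1 d1 -> UF w2 d2 ->
  w1 * a%:~R + w2 * b%:~R = (w1 * w2) * (d2%:Z * a + d1%:Z * b)%:~R.
Proof.
move=> [h1 p1] [h2 p2]; apply: hinj.
rewrite !rmorphD !rmorphM /= !rmorphD !rmorphM !iota_int h1 h2.
have hd1 : (d1%:R : rat) != 0 by rewrite pnatr_eq0 -lt0n.
have hd2 : (d2%:R : rat) != 0 by rewrite pnatr_eq0 -lt0n.
change ((Posz d1)%:~R : rat) with (d1%:R : rat).
change ((Posz d2)%:~R : rat) with (d2%:R : rat).
move: hd1 hd2; move: (d1%:R : rat) (d2%:R : rat) => D1 D2 hd1 hd2.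
field. by rewrite hd1 hd2.
Qed.

Lemma RepP_add n x1 x2 : RepP n x1 -> RepP n x2 -> RepP n (x1 + x2).
Proof.
move=> [w1 [d1 [y1 [u1 i1 ->]]]] [w2 [d2 [y2 [u2 i2 ->]]]].
exists (w1 * w2), (d1 * d2)%N, (gscale d2%:Z y1 + gscale d1%:Z y2); split.
- exact: UF_mul.
- by rewrite rpredD // Ipred_scale.
apply/ffunP => g; rewrite !ffunE /=.
exact: comb_pt.
Qed.

Lemma RepP0 n : RepP n 0.
Proof.
exists 1, 1%N, 0; split; first exact: UF1; first exact: rpred0.
by apply/ffunP => g; rewrite !ffunE /= rmorph0 mulr0.
Qed.

Lemma convZr (A : comNzRingType) s (a b : {ffun G -> A}) :
  conv a (gscale s b) = gscale s (conv a b).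
Proof.
apply/ffunP=> g; rewrite !ffunE mulr_sumr; apply: eq_bigr => h _.
by rewrite ffunE mulrCA.
Qed.

Lemma gscaleM (A : comNzRingType) s t (a : {ffun G -> A}) :
  gscale s (gscale t a) = gscale (s * t) a.
Proof. by apply/ffunP=> g; rewrite !ffunE mulrA. Qed.

Lemma RepP_0 x : RepP 0 x.
Proof.
have -> : x = \sum_(g : G) [ffun h => (h == g)%:R * x g].
  apply/ffunP => h; rewrite sum_ffunE (bigD1 h) //= big1 ?addr0.
    by rewrite ffunE eqxx mul1r.
  by move=> g hg; rewrite ffunE eq_sym (negbTE hg) mul0r.
apply: (big_ind (RepP 0)); [exact: RepP0 | exact: RepP_add |] => g _.
have [w [d [m [hw ->]]]] := UF_of (x g).
exists w, d, [ffun h => (h == g)%:R * m]; split; [done | by apply/asboolP |].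
apply/ffunP => h; rewrite !ffunE /=.
by case: (h == g); rewrite ?mul1r ?mul0r ?mulr0 // mulrzr.
Qed.

Lemma repf n x : x \in @Ipred R G n -> RepP n x.
Proof.
elim: n x => [|k IH] x; first by move=> _; exact: RepP_0.
move=> /asboolP [s [Hs ->]].
rewrite big_seq; apply: (big_ind (RepP k.+1)); [exact: RepP0 | exact: RepP_add |].
move=> p /Hs [a1 i2].
have [w1 [d1 [y1 [u1 _ e1]]]] := RepP_0 p.1.
have [w2 [d2 [y2 [u2 j2 e2]]]] := IH _ (asboolT i2).
have ay : aug y1 = 0.
  move: a1; rewrite e1 augZ mapAG_aug => /(congr1 iota).
  case: u1 => h1 p1.
  rewrite rmorphM rmorph0 h1 iota_int => /eqP; rewrite mulf_eq0 invr_eq0.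
  rewrite pnatr_eq0 (gtn_eqF p1) /= intr_eq0 => /eqP //.
exists (w1 * w2), (d1 * d2)%N, (conv y1 y2); split.
- exact: UF_mul.
- apply/asboolP; exists [:: (y1, y2)]; split; last by rewrite big_seq1.
  move=> q; rewrite inE => /eqP -> /=; split => //.
  by move/asboolP: j2.
by rewrite e1 e2 convZl convZr gscaleM mapAG_conv.
Qed.

Section Fixed.
Variables (n : nat) (T : lmodType R) (t : R -> Qn int G n -> T).
Hypothesis ht1 : forall x, zmod_morphism (t ^~ x).
Hypothesis ht2 : forall r, zmod_morphism (t r).

Local Notation PI := (\pi_(Qn R G n)).
Local Notation PZ := (\pi_(Qn int G n)).
Local Notation mI := (@mapIelt int R G intr n).

Lemma vMz (a : Ielt int G n) m : Ival (a *~ m) = gscale m (Ival a).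
Proof. by rewrite -scaler_int intz. Qed.

Lemma mapIelt_B a b : mI (a - b) = mI a - mI b.
Proof. by apply: val_inj; apply/ffunP => g; rewrite /= !ffunE rmorphB. Qed.

Lemma mapIelt_Mz a m : mI (a *~ m) = mI a *~ m.
Proof.
apply: val_inj; rewrite -[mI a *~ m]scaler_int.
change (mapAG intr (Ival (a *~ m)) = gscale (m%:~R : R) (mapAG intr (Ival a))).
rewrite vMz; apply/ffunP => g.
by rewrite !ffunE /= intrM.
Qed.

Lemma rep (x : Ielt R G n) : exists w d y, UF w d /\ x = w *: mI y.
Proof.
have [w [d [y [u iy e]]]] := repf _ _ (Ivalin x).
exists w, d, (MkIelt iy); split => //; exact: val_inj.
Qed.

Lemma combI w1 d1 w2 d2 y1 y2 : UF w1 d1 -> UF w2 d2 ->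
  w1 *: mI y1 - w2 *: mI y2 = (w1 * w2) *: mI (y1 *~ d2 - y2 *~ d1).
Proof.
move=> u1 u2; apply: val_inj; rewrite /= !vMz; apply/ffunP => g.
rewrite !ffunE /=.
have := comb_pt _ _ _ _ (Ival y1 g) (- Ival y2 g) u1 u2.
by rewrite !intrN !mulrN => ->.
Qed.

Lemma pi0 (A : comNzRingType) (a : Ielt A G n) : a \in @Inext A G n -> \pi_(Qn A G n) a = 0.
Proof.
by move=> h; apply/eqP; rewrite -(raddf0 (\pi_(Qn A G n))) -Quotient.idealrBE subr0.
Qed.

Lemma pi_eq0 (A : comNzRingType) (a : Ielt A G n) : \pi_(Qn A G n) a = 0 -> Ival a \in @Ipred A G n.+1.
Proof.
move=> h; have : a - 0 \in @Inext A G n.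
  by rewrite Quotient.idealrBE h raddf0.
by rewrite subr0.
Qed.

Lemma tMz_r r x m : t r (x *~ m) = t r x *~ m.
Proof. by move: (raddfMz (packadd (ht2 r)) m x). Qed.
Lemma tMz_l r x m : t (r *~ m) x = t r x *~ m.
Proof. by move: (raddfMz (packadd (ht1 x)) m r). Qed.
Lemma tB_r r x y : t r (x - y) = t r x - t r y.
Proof. exact: ht2. Qed.
Lemma t0_r r : t r 0 = 0.
Proof. by move: (raddf0 (packadd (ht2 r))). Qed.

Lemma pZB (a b : Ielt int G n) : PZ (a - b) = PZ a - PZ b :> Qn int G n.
Proof. exact: raddfB. Qed.
Lemma pZMz (a : Ielt int G n) m : PZ (a *~ m) = PZ a *~ m :> Qn int G n.
Proof. exact: raddfMz. Qed.
Lemma pRB (a b : Ielt R G n) : PI (a - b) = PI a - PI b :> Qn R G n.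
Proof. exact: raddfB. Qed.

Definition tt w y := t w (PZ y).

Lemma Tcomb w1 d1 w2 d2 y1 y2 : UF w1 d1 -> UF w2 d2 ->
  tt w1 y1 - tt w2 y2 = tt (w1 * w2) (y1 *~ d2 - y2 *~ d1).
Proof.
move=> u1 u2; rewrite /tt pZB !pZMz tB_r !tMz_r -!tMz_l.
by rewrite (UF_scale _ _ _ _ u1 u2) mulrC (UF_scale _ _ _ _ u2 u1).
Qed.

Lemma key w d w' d' y y' : UF w d -> UF w' d' ->
  PI (w *: mI y) = PI (w' *: mI y') -> tt w y = tt w' y'.
Proof.
move=> u u' e; apply/eqP; rewrite -subr_eq0 (Tcomb _ _ _ _ _ _ u u').
set z := y *~ d' - y' *~ d.
have uW := UF_mul _ _ _ _ u u'.
have : PI ((w * w') *: mI z) = 0 by rewrite -combI // pRB e subrr.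
move=> /pi_eq0 /(repf _ _) [w3 [d3 [v [u3 iv ev]]]].
have ez : Ival (z *~ d3) = gscale (d * d')%N%:Z v.
  apply/ffunP => g; rewrite vMz !ffunE.
  move/ffunP: ev => /(_ g); rewrite /= !ffunE => /(congr1 iota).
  case: u => hw pw; case: u' => hw' pw'; case: u3 => h3 p3.
  rewrite !rmorphM hw hw' h3 !iota_int -invfM => h.
  apply/eqP; rewrite -(eqr_int rat) /= !intrM; apply/eqP.
  change ((Posz d3)%:~R : rat) with (d3%:R : rat).
  change ((Posz d)%:~R : rat) with (d%:R : rat).
  change ((Posz d')%:~R : rat) with (d'%:R : rat).
  have hd3 : (d3%:R : rat) != 0 by rewrite pnatr_eq0 -lt0n.
  have hdd : ((d%:R * d'%:R) : rat) != 0.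
    by rewrite mulf_neq0 // pnatr_eq0 -lt0n.
  move: h hd3 hdd; move: (d3%:R : rat) ((d%:R * d'%:R) : rat) => D3 DD h hd3 hdd.
  exact: cross.
have hz : z *~ d3 \in @Inext int G n.
  by rewrite /Inext unfold_in /= ez Ipred_scale.
rewrite /tt -(UF_scale _ _ _ _ uW u3) tMz_l -tMz_r -pZMz pi0 // t0_r //.
Qed.


Hypothesis ht3 : forall (s r : R) (x : Qn int G n), t (s * r) x = s *: t r x.

Definition bb r (q : Qn int G n) : Qn R G n := PI (r *: mI (generic_quotient.repr q)).

Lemma bpi r a : bb r (PZ a) = PI (r *: mI a).
Proof.
rewrite /bb; apply/eqP; rewrite -subr_eq0 -pRB -scalerBr -mapIelt_B; apply/eqP.
apply: pi0; apply: Inext_scale.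
have : generic_quotient.repr (PZ a) - a \in @Inext int G n by rewrite Quotient.idealrBE reprK.
exact: mapAG_Ipred.
Qed.

Lemma bB1 x : zmod_morphism (bb ^~ x).
Proof. by move=> r1 r2; rewrite /bb scalerBl pRB. Qed.

Lemma bB2 r : zmod_morphism (bb r).
Proof.
move=> q1 q2; rewrite -[q1](@reprK _ (Qn int G n)) -[q2](@reprK _ (Qn int G n)) -pZB !bpi mapIelt_B scalerBr pRB.
by [].
Qed.

Variable h : {additive T -> Qn R G n}.
Hypothesis hh : forall r x, h (t r x) = bb r x.
Hypothesis ht5 : forall (V : zmodType) (h1 h2 : {additive T -> V}),
         (forall r x, h1 (t r x) = h2 (t r x)) -> h1 =1 h2.

Lemma hsc : scalable h.
Proof.
move=> s u.
have a1 : zmod_morphism (fun u => h (s *: u)) by move=> x y; rewrite scalerBr raddfB.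
have a2 : zmod_morphism (fun u => s *: h u) by move=> x y; rewrite raddfB scalerBr.
suff H : packadd a1 =1 packadd a2 by exact: H u.
apply: ht5 => r x.
rewrite !packaddE -ht3 !hh -[x](@reprK _ (Qn int G n)) !bpi -scalerA.
exact: pi_scale.
Qed.

Definition fL := packlin hsc.

Lemma repq (q : Qn R G n) : exists p : R * nat * Ielt int G n,
  UF p.1.1 p.1.2 /\ q = PI (p.1.1 *: mI p.2).
Proof.
have [w [d [y [u e]]]] := rep (generic_quotient.repr q).
by exists (w, d, y); split => //=; rewrite -e reprK.
Qed.

Definition gfun q := let p := sval (cid (repq q)) in tt p.1.1 p.2.

Lemma gspec w d y : UF w d -> gfun (PI (w *: mI y)) = tt w y.
Proof.
move=> u; rewrite /gfun; have [u' e] := svalP (cid (repq (PI (w *: mI y)))).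
by apply: (key _ _ _ _ _ _ u' u); rewrite -e.
Qed.

Lemma gadd : zmod_morphism gfun.
Proof.
move=> q1 q2.
have [[[w1 d1] y1] [/= u1 ->]] := repq q1.
have [[[w2 d2] y2] [/= u2 ->]] := repq q2.
rewrite -pRB (combI _ _ _ _ _ _ u1 u2) (gspec _ _ _ (UF_mul _ _ _ _ u1 u2)).
by rewrite (gspec _ _ _ u1) (gspec _ _ _ u2) (Tcomb _ _ _ _ _ _ u1 u2).
Qed.

Lemma fg : cancel gfun fL.
Proof.
move=> q; have [[[w d] y] [/= u ->]] := repq q.
rewrite (gspec _ _ _ u) /tt.
change (h (t w (PZ y)) = PI (w *: mI y)); by rewrite hh bpi.
Qed.

Lemma gf : cancel fL gfun.
Proof.
have a1 : zmod_morphism (fun u => gfun (fL u)).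
  move=> x y; change (gfun (h (x - y)) = gfun (h x) - gfun (h y)).
  by rewrite raddfB gadd.
have a2 : zmod_morphism (fun u : T => u) by [].
move=> u; suff H : packadd a1 =1 packadd a2 by exact: H u.
apply: ht5 => r x.
change (gfun (h (t r x)) = t r x).
rewrite hh -[x](@reprK _ (Qn int G n)) bpi.
have [w [d [m [uw ->]]]] := UF_of r.
have -> : (w *~ m) *: mI (generic_quotient.repr x) = w *: mI (generic_quotient.repr x *~ m).
  by rewrite mapIelt_Mz -scalerMzl scalerMzr.
by rewrite (gspec _ _ _ uw) /tt pZMz tMz_r -tMz_l.
Qed.

End Fixed.
End Main.

Theorem lemma1p1 (G : finGroupType) (R : comNzRingType)
    (iota : {rmorphism R -> rat}) (n : nat)
    (T : lmodType R) (t : R -> Qn int G n -> T) :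
  abelian [set: G] -> injective iota ->
  is_scalar_ext_tensor t ->
  exists f : {linear T -> Qn R G n},
    (forall (r : R) (a : Ielt int G n),
        f (t r (\pi_(Qn int G n) a)) = \pi_(Qn R G n) (r *: mapIelt intr a))
    /\ bijective f.
Proof.
move=> _ hinj [[ht1 ht2] ht3 ht4 ht5].
have [h hh] := ht4 _ _ (conj (@bB1 G R n) (@bB2 G R n)).
exists (@fL G R n T t ht3 h hh ht5); split.
  by move=> r a; rewrite /= hh bpi.
by exists (@gfun G R iota hinj n T t); [exact: (@gf G R iota hinj n T t ht1 ht2 ht3 h hh ht5) | exact: (@fg G R iota hinj n T t ht1 ht2 ht3 h hh ht5)].
Qed.
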